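(* Let $k$ be a field of characteristic zero, $S=k[x_1,\dots,x_n]$, and let $J\subset I$ be homogeneous ideals of $S$ (not necessarily monomial) with $S/J$ Artinian. Let $<$ be any term order on $S$, and denote by $\mathrm{in}_<(\cdot)$ the initial ideal. If the graded $S$-module $\mathrm{in}_<(I)/\mathrm{in}_<(J)$ has the weak Lefschetz property (respectively, the strong Lefschetz property), then the graded $S$-module $I/J$ has the weak Lefschetz property (respectively, the strong Lefschetz property).
   Context: $S$ is standard graded. A finite graded $S$-module $M=\bigoplus_i M_i$ has the weak Lefschetz property if there is a linear form $\ell\in S_1$ such that each multiplication map $\times\ell\colon M_i\to M_{i+1}$ has maximal rank (is injective or surjective); it has the strong Lefschetz property if there is $\ell\in S_1$ such that $\times\ell^d\colon M_i\to M_{i+d}$ has maximal rank for all $d>0$ and all $i$. *)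

(* Defs.v *)
From HB Require Import structures.
From mathcomp Require Import all_boot all_order all_algebra.
From mathcomp Require Import mpoly.
Set Implicit Arguments. Unset Strict Implicit. Unset Printing Implicit Defensive.
Import Order.TTheory GRing.Theory.
Local Open Scope ring_scope.

Section Defs.
Variables (k : fieldType) (n : nat).
Local Notation S := {mpoly k[n]}.

Definition is_ideal (I : S -> Prop) : Prop :=
  [/\ I 0,
      (forall f g, I f -> I g -> I (f + g)) &
      (forall r f, I f -> I (r * f))].

Definition is_homogeneous_ideal (I : S -> Prop) : Prop :=
  is_ideal I /\ forall f (d : nat), I f -> I (pihomog mdeg d f).

(* S/J is Artinian: descending chain condition on the ideals of S/J, i.e. on
   the ideals of S containing J. *)
Definition quotient_artinian (J : S -> Prop) : Prop :=
  forall (C : nat -> S -> Prop),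
    (forall m, is_ideal (C m)) ->
    (forall m f, J f -> C m f) ->
    (forall m f, C m.+1 f -> C m f) ->
    exists N, forall m, (N <= m)%N -> forall f, C m f <-> C N f.

Definition term_order (lt : rel 'X_{1..n}) : Prop :=
  [/\ (forall m, ~~ lt m m),
      (forall a b c, lt a b -> lt b c -> lt a c),
      (forall a b, a != b -> lt a b || lt b a),
      (forall a b c, lt a b -> lt (a + c)%MM (b + c)%MM) &
      (forall m, m != 0%MM -> lt 0%MM m)].

Definition is_lead_monom (lt : rel 'X_{1..n}) (f : S) (m : 'X_{1..n}) : Prop :=
  m \in msupp f /\ forall m', m' \in msupp f -> m' != m -> lt m' m.

Definition ideal_gen (G : S -> Prop) : S -> Prop :=
  fun q => exists s : seq (S * S),
    (forall x, x \in s -> G x.2) /\ q = \sum_(x <- s) x.1 * x.2.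

Definition initial_ideal (lt : rel 'X_{1..n}) (I : S -> Prop) : S -> Prop :=
  ideal_gen (fun g => exists f m, [/\ I f, f != 0, is_lead_monom lt f m &
                                      g = 'X_[m]]).

(* For the graded module M = I/J (J ⊆ I homogeneous), with M_i = I_i / J_i:
   multiplication by g : M_i -> M_{i+d} has maximal rank (injective or
   surjective). *)
Definition mul_max_rank (I J : S -> Prop) (g : S) (i d : nat) : Prop :=
  (forall f, I f -> f \is i.-homog -> J (g * f) -> J f)
  \/
  (forall h, I h -> h \is (i + d)%N.-homog ->
     exists f, [/\ I f, f \is i.-homog & J (h - g * f)]).

Definition has_WLP (I J : S -> Prop) : Prop :=
  exists l : S, l \is 1.-homog /\ forall i : nat, mul_max_rank I J l i 1.

Definition has_SLP (I J : S -> Prop) : Prop :=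
  exists l : S, l \is 1.-homog /\
    forall d : nat, (0 < d)%N -> forall i : nat, mul_max_rank I J (l ^+ d) i d.

End Defs.

(* Main.v *)
Require Import Defs.
From HB Require Import structures.
From mathcomp Require Import all_boot all_order all_algebra.
From mathcomp Require Import ssrcomplements mpoly perm.
From Stdlib Require Import Classical ClassicalEpsilon.
Set Implicit Arguments. Unset Strict Implicit. Unset Printing Implicit Defensive.
Import Order.TTheory GRing.Theory.
Local Open Scope ring_scope.

Definition pb (P : Prop) : bool := if excluded_middle_informative P then true else false.
Lemma pbP (P : Prop) : reflect P (pb P).
Proof. by rewrite /pb; case: excluded_middle_informative => h; constructor. Qed.

Section PartA.
Variables (k : fieldType) (n : nat) (lt : rel 'X_{1..n}).
Hypothesis Hlt : term_order lt.
Local Notation S := {mpoly k[n]}.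

Definition le_t (a b : 'X_{1..n}) := (a == b) || lt a b.

Lemma tlxx m : ~~ lt m m. Proof. by case: Hlt => h _ _ _ _; apply: h. Qed.
Lemma tl_trans a b c : lt a b -> lt b c -> lt a c. Proof. by case: Hlt => _ h _ _ _; apply: h. Qed.
Lemma tl_total a b : a != b -> lt a b || lt b a. Proof. by case: Hlt => _ _ h _ _; apply: h. Qed.
Lemma tl_addr a b c : lt a b -> lt (a + c)%MM (b + c)%MM. Proof. by case: Hlt => _ _ _ h _; apply: h. Qed.
Lemma tl_addl a b c : lt a b -> lt (c + a)%MM (c + b)%MM.
Proof. by move=> h; rewrite ![(c + _)%MM]addmC; apply: tl_addr. Qed.
Lemma tl_asym a b : lt a b -> ~~ lt b a.
Proof. by move=> h; apply/negP => h'; have := tl_trans h h'; rewrite (negbTE (tlxx a)). Qed.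
Lemma tl_neq a b : lt a b -> a != b.
Proof. by move=> h; apply/eqP => e; move: h; rewrite e (negbTE (tlxx b)). Qed.

Lemma le_t_refl a : le_t a a. Proof. by rewrite /le_t eqxx. Qed.
Lemma le_t_trans a b c : le_t a b -> le_t b c -> le_t a c.
Proof.
rewrite /le_t => /orP[/eqP->//|h1] /orP[/eqP<-|h2]; first by rewrite h1 orbT.
by rewrite (tl_trans h1 h2) orbT.
Qed.
Lemma le_tl_trans a b c : le_t a b -> lt b c -> lt a c.
Proof. by rewrite /le_t => /orP[/eqP->//|h1] h2; apply: tl_trans h1 h2. Qed.
Lemma tl_le_trans a b c : lt a b -> le_t b c -> lt a c.
Proof. by move=> h1 /orP[/eqP<-//|h2]; apply: tl_trans h1 h2. Qed.
Lemma le_t_total a b : le_t a b || le_t b a.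
Proof.
rewrite /le_t; case: (eqVneq a b) => [->|ne] /=; first by [].
by case/orP: (tl_total ne) => ->; rewrite ?orbT.
Qed.
Lemma tl_nle a b : lt a b -> ~~ le_t b a.
Proof. by move=> h; rewrite /le_t negb_or eq_sym tl_neq // tl_asym. Qed.

Lemma le_t_add a b c d : le_t a b -> le_t c d -> le_t (a + c)%MM (b + d)%MM.
Proof.
move=> h1 h2; apply: (@le_t_trans _ (b + c)%MM).
  by case/orP: h1 => [/eqP->|h]; rewrite ?le_t_refl // /le_t tl_addr ?orbT.
by case/orP: h2 => [/eqP->|h]; rewrite ?le_t_refl // /le_t tl_addl ?orbT.
Qed.

Lemma le_t_add_eq a b c d : le_t a b -> le_t c d -> (a + c)%MM = (b + d)%MM ->
  a = b /\ c = d.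
Proof.
move=> h1 h2 e.
have ab : a = b.
  case/orP: h1 => [/eqP//|h1].
  have h : lt (a + c)%MM (b + d)%MM.
    apply: (@tl_le_trans _ (b + c)%MM); first exact: tl_addr.
    by case/orP: h2 => [/eqP->|h]; rewrite ?le_t_refl // /le_t tl_addl ?orbT.
  by move: h; rewrite e (negbTE (tlxx _)).
by split=> //; move: e; rewrite ab => /addmI.
Qed.

Section Ideal.
Variable (P : S -> Prop).
Hypothesis HP : is_ideal P.
Lemma I0 : P 0. Proof. by case: HP. Qed.
Lemma ID f g : P f -> P g -> P (f + g). Proof. by case: HP => _ h _; apply: h. Qed.
Lemma IM r f : P f -> P (r * f). Proof. by case: HP => _ _ h; apply: h. Qed.
Lemma IMr r f : P f -> P (f * r). Proof. by rewrite mulrC; apply: IM. Qed.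
Lemma IZ (c : k) f : P f -> P (c *: f). Proof. by rewrite -mul_mpolyC; apply: IM. Qed.
Lemma IN f : P f -> P (- f). Proof. by rewrite -scaleN1r; apply: IZ. Qed.
Lemma IB f g : P f -> P g -> P (f - g). Proof. by move=> hf hg; apply: ID => //; apply: IN. Qed.
Lemma Isum (I : eqType) (r : seq I) (F : I -> S) :
  (forall i, i \in r -> P (F i)) -> P (\sum_(i <- r) F i).
Proof.
elim: r => [|x r IH] h; first by rewrite big_nil; apply: I0.
rewrite big_cons; apply: ID; first by apply: h; rewrite inE eqxx.
by apply: IH => i hi; apply: h; rewrite inE hi orbT.
Qed.
Lemma Isumf (I : finType) (F : I -> S) :
  (forall i, P (F i)) -> P (\sum_i F i).
Proof. by move=> h; apply: Isum => i _. Qed.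
End Ideal.

Lemma seq_max (s : seq 'X_{1..n}) : s != [::] ->
  exists2 m, m \in s & forall m', m' \in s -> m' != m -> lt m' m.
Proof.
elim: s => [//|x s IH] _.
case: (eqVneq s [::]) => [->|ne].
  by exists x; rewrite ?inE ?eqxx // => m'; rewrite inE => /eqP ->; rewrite eqxx.
have [m ms hm] := IH ne.
case hx: (lt m x).
  exists x; first by rewrite inE eqxx.
  move=> m'; rewrite inE => /orP[/eqP->|m's]; first by rewrite eqxx.
  move=> _; case: (eqVneq m' m) => [->//|ne']; exact: tl_trans (hm _ m's ne') hx.
exists m; first by rewrite inE ms orbT.
move=> m'; rewrite inE => /orP[/eqP->|m's] ne'; last exact: hm.
by move: (tl_total ne'); rewrite hx orbF.
Qed.

Lemma lead_exists (f : S) : f != 0 -> exists m, is_lead_monom lt f m.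
Proof.
move=> nz; have : msupp f != [::] by rewrite msupp_eq0.
by case/seq_max => m h1 h2; exists m; split.
Qed.

Lemma lead_uniq (f : S) m m' : is_lead_monom lt f m -> is_lead_monom lt f m' -> m = m'.
Proof.
move=> [h1 h2] [h1' h2']; apply/eqP/negP => /negP ne.
have ne' : m' != m by rewrite eq_sym.
have := tl_trans (h2 _ h1' ne') (h2' _ h1 ne).
by rewrite (negbTE (tlxx _)).
Qed.

Lemma lead_le (f : S) m w : is_lead_monom lt f m -> w \in msupp f -> le_t w m.
Proof.
move=> [_ h] ws; rewrite /le_t; case: (eqVneq w m) => //= ne; exact: h.
Qed.

Lemma lead_mulX (f : S) m b : is_lead_monom lt f m -> is_lead_monom lt (f * 'X_[b]) (b + m)%MM.
Proof.
move=> [h1 h2]; have pe := msuppMX f b; split.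
  by rewrite (perm_mem pe); apply/mapP; exists m.
move=> w; rewrite (perm_mem pe) => /mapP [w' w's ->] ne.
apply: tl_addl; apply: h2 => //; apply: contraNneq ne => ->. by [].
Qed.

Definition LM (P : S -> Prop) (m : 'X_{1..n}) := exists f, P f /\ is_lead_monom lt f m.

Lemma LM_mulX P m b : is_ideal P -> LM P m -> LM P (b + m)%MM.
Proof.
move=> hP [f [hf hl]]; exists (f * 'X_[b]); split; first exact: IMr.
exact: lead_mulX.
Qed.

End PartA.

Lemma sum_uniq_pick (R : nmodType) (I : eqType) (r : seq I) (i : I) (F : I -> R) :
  uniq r -> (forall j, j != i -> F j = 0) ->
  \sum_(j <- r) F j = if i \in r then F i else 0.
Proof.
move=> ur h; case: (boolP (i \in r)) => ir.
  by rewrite (bigD1_seq i) //= big1 ?addr0 // => j /h.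
rewrite big1_seq // => j /andP[_ jr]; apply: h.
by apply: contraNneq ir => <-.
Qed.

Section PartB.
Variables (k : fieldType) (n : nat) (lt : rel 'X_{1..n}).
Hypothesis Hlt : term_order lt.
Local Notation S := {mpoly k[n]}.

Lemma mcoeff_sumX (s : seq 'X_{1..n}) (P : pred 'X_{1..n}) (c : 'X_{1..n} -> k) m :
  uniq s ->
  (\sum_(m' <- s | P m') c m' *: 'X_[m'] : S)@_m = if (m \in s) && P m then c m else 0.
Proof.
move=> us; rewrite raddf_sum big_mkcond /=.
rewrite (sum_uniq_pick (i := m)) //.
  by case: (m \in s); case: (P m); rewrite //= mcoeffZ mcoeffX eqxx mulr1.
move=> j ne; case: (P j) => //; rewrite mcoeffZ mcoeffX.
by rewrite (negbTE ne) mulr0.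
Qed.

Lemma pihomog_coef d (p : S) m :
  (pihomog mdeg d p)@_m = if mdeg m == d then p@_m else 0.
Proof.
rewrite pihomogE mcoeff_sumX ?msupp_uniq //.
case: (boolP (m \in msupp p)) => //= h.
by rewrite (memN_msupp_eq0 h); case: (_ == _).
Qed.

Lemma init_char (P : S -> Prop) (f : S) : is_ideal P ->
  initial_ideal lt P f <-> (forall m, m \in msupp f -> LM lt P m).
Proof.
move=> HP; split.
  case=> s [hs ->] m /msupp_sum_le /flattenP [sm /mapP [x xs ->]].
  rewrite filter_predT in xs.
  case: (hs x xs) => f0 [m0 [Pf0 _ hl ->]].
  rewrite (perm_mem (msuppMX _ _)) => /mapP [m' _ ->].
  by rewrite addmC; apply: (LM_mulX Hlt) => //; exists f0.
move=> h; exists [seq ((f@_m)%:MP, 'X_[m]) | m <- msupp f]; split.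
  move=> x /mapP [m ms ->] /=.
  have [g [Pg hg]] := h m ms.
  exists g, m; split => //; apply/eqP => g0; move: hg => [].
  by rewrite g0 msupp0.
rewrite big_map /= {1}(mpolyE f); apply: eq_bigr => m _.
by rewrite mul_mpolyC.
Qed.

Lemma LM_ideal_nz (P : S -> Prop) (f : S) m : is_lead_monom lt f m -> f != 0.
Proof. by case=> h _; apply/eqP => f0; move: h; rewrite f0 msupp0. Qed.

Lemma lead_homog (P : S -> Prop) m : is_homogeneous_ideal P -> LM lt P m ->
  exists g : S, [/\ P g, g \is (mdeg m).-homog, g@_m = 1 &
     forall w, w \in msupp g -> w != m -> lt w m].
Proof.
move=> [HP HH] [f [Pf [mf hf]]].
set g0 := pihomog mdeg (mdeg m) f.
have c0 : g0@_m = f@_m by rewrite /g0 pihomog_coef eqxx.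
have nz : f@_m != 0 by rewrite -mcoeff_msupp.
exists ((f@_m)^-1 *: g0); split.
- by apply: IZ => //; apply: HH.
- by apply: dhomogZ; apply: pihomogP.
- by rewrite mcoeffZ c0 mulVf.
move=> w /msuppZ_le; rewrite mcoeff_msupp /g0 pihomog_coef.
case: (mdeg w == mdeg m); last by rewrite eqxx.
by rewrite -mcoeff_msupp; apply: hf.
Qed.

Lemma art_bound (J : S -> Prop) : is_homogeneous_ideal J -> quotient_artinian J ->
  exists N, forall e (f : S), (N <= e)%N -> f \is e.-homog -> J f.
Proof.
move=> [HJ HH] HA.
pose C (m : nat) := fun f : S => exists j, J j /\
   forall w, w \in msupp (f - j) -> (m <= mdeg w)%N.
have Cid m : is_ideal (C m).
  split.
  - by exists 0; split; [apply: I0 | rewrite subr0 msupp0].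
  - move=> f g [j1 [J1 h1]] [j2 [J2 h2]]; exists (j1 + j2); split; first exact: ID.
    move=> w; rewrite opprD addrACA => /msuppD_le; rewrite mem_cat.
    by case/orP => [/h1|/h2].
  - move=> r f [j [Jj h]]; exists (r * j); split; first exact: IM.
    move=> w; rewrite -mulrBr => /msuppM_le /allpairsP [[m1 m2] /= [_ m2s ->]].
    by rewrite mdegD (leq_trans (h _ m2s)) // leq_addl.
have hJC : forall m f, J f -> C m f.
  by move=> m f Jf; exists f; split => //; rewrite subrr msupp0.
have hdec : forall m f, C m.+1 f -> C m f.
  by move=> m f [j [Jj h]]; exists j; split => // w /h; apply: leq_trans.
have [N hN] := HA C Cid hJC hdec.
exists N => e f le hf.
have Cef : C e f.
  by exists 0; split; [apply: I0 | move=> w; rewrite subr0 => /(dhomog_mf hf) ->].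
have : C e.+1 f.
  apply/(hN _ (leq_trans le (leqnSn _))); apply/(hN _ le); exact: Cef.
move=> [j [Jj h]].
have e1 : pihomog mdeg e (f - j) = 0.
  apply/mpolyP => w; rewrite pihomog_coef mcoeff0.
  case: (eqVneq (mdeg w) e) => // dw.
  apply/memN_msupp_eq0/negP => /h; rewrite dw ltnn //.
have : f = pihomog mdeg e j.
  by move/eqP: e1; rewrite raddfB /= subr_eq0 (pihomog_dE hf) => /eqP.
by move=> ->; apply: HH.
Qed.

End PartB.

Section Ext.
Variables (k : fieldType) (n : nat).
Local Notation S := {mpoly k[n]}.
Variable G : 'X_{1..n} -> S.

Definition ext (p : S) : S := \sum_(m <- msupp p) p@_m *: G m.

Lemma extE (p : S) w : (msize p <= w)%N ->
  ext p = \sum_(m : 'X_{1..n < w}) p@_m *: G m.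
Proof.
move=> le_pi; set I : subFinType _ := 'X_{1..n < w}.
rewrite /ext (big_mksub I) ?msupp_uniq //=; first last.
  by move=> x /msize_mdeg_lt /leq_trans; apply.
rewrite big_rmcond //= => j /memN_msupp_eq0 ->.
by rewrite scale0r.
Qed.

Lemma ext_lin (a : k) (p q : S) : ext (a *: p + q) = a *: ext p + ext q.
Proof.
pose w := (maxn (msize p) (msize q)).+1.
have hp : (msize p <= w)%N by rewrite /w ltnW // ltnS leq_maxl.
have hq : (msize q <= w)%N by rewrite /w ltnW // ltnS leq_maxr.
have hpq : (msize (a *: p + q) <= w)%N.
  apply: leq_trans (msizeD_le _ _) _; rewrite geq_max hq andbT.
  exact: leq_trans (mmeasureZ_le _ _ _) hp.
rewrite (extE hp) (extE hq) (extE hpq) scaler_sumr -big_split /=.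
by apply: eq_bigr => m _; rewrite mcoeffD mcoeffZ scalerDl scalerA.
Qed.

Lemma ext0 : ext 0 = 0. Proof. by rewrite /ext msupp0 big_nil. Qed.
Lemma extD p q : ext (p + q) = ext p + ext q.
Proof. by have := ext_lin 1 p q; rewrite !scale1r. Qed.
Lemma extZ a p : ext (a *: p) = a *: ext p.
Proof. by have := ext_lin a p 0; rewrite !addr0 ext0 addr0. Qed.
Lemma extN p : ext (- p) = - ext p.
Proof. by rewrite -scaleN1r extZ scaleN1r. Qed.
Lemma extB p q : ext (p - q) = ext p - ext q.
Proof. by rewrite extD extN. Qed.
Lemma ext_sum (I : Type) (r : seq I) (F : I -> S) :
  ext (\sum_(i <- r) F i) = \sum_(i <- r) ext (F i).
Proof.
elim: r => [|x r IH]; first by rewrite !big_nil ext0.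
by rewrite !big_cons extD IH.
Qed.
Lemma extX m : ext 'X_[m] = G m.
Proof. by rewrite /ext msuppX big_seq1 mcoeffX eqxx scale1r. Qed.

End Ext.

Section PartC.
Variables (k : fieldType) (n : nat) (lt : rel 'X_{1..n}).
Hypothesis Hlt : term_order lt.
Local Notation S := {mpoly k[n]}.
Variable J : S -> Prop.
Hypothesis HJ : is_homogeneous_ideal J.
Local Notation LMJ := (LM lt J).

Lemma HJi : is_ideal J. Proof. by case: HJ. Qed.

Definition rk e (v : 'X_{1..n}) :=
  #|[pred w : 'X_{1..n < e.+1} | (mdeg w == e) && lt w v]|.

Lemma rk_lt e w v : mdeg w = e -> lt w v -> (rk e w < rk e v)%N.
Proof.
move=> dw hwv; apply: proper_card; apply/properP; split.
  apply/subsetP => x; rewrite !inE => /andP[-> h] /=.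
  exact: (tl_trans Hlt h hwv).
have hb : (mdeg w < e.+1)%N by rewrite dw.
exists (BMultinom hb); rewrite !inE /= dw eqxx //=.
exact: tlxx.
Qed.

Definition nfspec (v : 'X_{1..n}) (r : S) :=
  [/\ forall w, w \in msupp r -> [/\ le_t lt w v, ~ LMJ w & mdeg w = mdeg v],
      J ('X_[v] - r) & r@_v = (if pb (LMJ v) then 0 else 1)].

Definition nfm (v : 'X_{1..n}) : S := epsilon (inhabits 0) (nfspec v).

Lemma nfm_spec v : nfspec v (nfm v).
Proof.
suff : forall K v, (rk (mdeg v) v < K)%N -> nfspec v (nfm v).
  by move=> h; apply: (h (rk (mdeg v) v).+1).
elim=> [//|K IH] {}v hK; rewrite /nfm; apply: epsilon_spec.
case: (pbP (LMJ v)) => hv; last first.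
  exists 'X_[v]; split.
  - by move=> w /mem_msuppXP <-; split => //; apply: le_t_refl.
  - by rewrite subrr; apply: (I0 HJi).
  - have -> : pb (LMJ v) = false by apply/pbP.
    by rewrite mcoeffX eqxx.
have [h [Jh hh h1 hlt]] := lead_homog HJ hv.
set q := 'X_[v] - h.
have qs w : w \in msupp q -> lt w v /\ mdeg w = mdeg v.
  move=> wq; have wv : w != v.
    by apply: contraTneq wq => ->; rewrite mcoeff_msupp mcoeffB mcoeffX eqxx h1 subrr eqxx.
  move: wq => /msuppB_le; rewrite mem_cat => /orP[/mem_msuppXP e|wh].
    by move: wv; rewrite e eqxx.
  by split; [apply: hlt | apply: (dhomog_mf hh)].
exists (\sum_(w <- msupp q) q@_w *: nfm w).
have sp w : w \in msupp q -> nfspec w (nfm w).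
  move=> /qs [l d]; apply: IH; rewrite d.
  by apply: leq_trans (rk_lt d l) _; rewrite -ltnS.
have supp_r : forall w, w \in msupp (\sum_(w <- msupp q) q@_w *: nfm w) ->
      [/\ le_t lt w v, ~ LMJ w & mdeg w = mdeg v].
  move=> w /msupp_sum_le /flattenP [s /mapP [w' w'q ->]] /msuppZ_le ws.
  rewrite filter_predT in w'q.
  have [hs _ _] := sp _ w'q; have [a1 a2 a3] := hs _ ws.
  have [l d] := qs _ w'q.
  split => //; last by rewrite a3 d.
  by rewrite /le_t (le_tl_trans Hlt a1 l) orbT.
split => //.
- have -> : 'X_[v] - \sum_(w <- msupp q) q@_w *: nfm w =
     h + \sum_(w <- msupp q) q@_w *: ('X_[w] - nfm w).
    rewrite [in RHS](eq_bigr (fun w => q@_w *: 'X_[w] - q@_w *: nfm w));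
      last by move=> w _; rewrite scalerBr.
    by rewrite sumrB -(mpolyE q) /q addrA (addrC h) subrK.
  apply: (ID HJi) => //; apply: (Isum HJi) => w wq; apply: (IZ HJi).
  by case: (sp _ wq).
- have -> : pb (LMJ v) = true by apply/pbP.
  by apply/memN_msupp_eq0/negP => /supp_r [_ nl _]; apply: nl.
Qed.
End PartC.

Lemma sum_pick_in (R : nmodType) (I : eqType) (r : seq I) (i : I) (F : I -> R) :
  uniq r -> (forall j, j \in r -> j != i -> F j = 0) ->
  \sum_(j <- r) F j = if i \in r then F i else 0.
Proof.
move=> ur h; case: (boolP (i \in r)) => ir.
  rewrite (bigD1_seq i) //= big_seq_cond big1 ?addr0 // => j /andP[jr ne].
  exact: h.
rewrite big1_seq // => j /andP[_ jr]; apply: h => //.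
by apply: contraNneq ir => <-.
Qed.

Section ExtCoef.
Variables (k : fieldType) (n : nat).
Local Notation S := {mpoly k[n]}.
Lemma ext_coef (G : 'X_{1..n} -> S) (p : S) u :
  (ext G p)@_u = \sum_(v <- msupp p) p@_v * (G v)@_u.
Proof. by rewrite /ext raddf_sum; apply: eq_bigr => v _ /=; rewrite mcoeffZ. Qed.

Lemma ext_supp (G : 'X_{1..n} -> S) (p : S) u :
  (ext G p)@_u != 0 -> exists2 v, v \in msupp p & u \in msupp (G v).
Proof.
rewrite ext_coef => h.
have : ~~ all (fun v => u \notin msupp (G v)) (msupp p).
  apply: contra h => /allP H; rewrite big1_seq // => v /andP[_ vs].
  by rewrite (memN_msupp_eq0 (H v vs)) mulr0.
by case/allPn => v vs; rewrite negbK => uv; exists v.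
Qed.
End ExtCoef.

Section PartD.
Variables (k : fieldType) (n : nat) (lt : rel 'X_{1..n}).
Hypothesis Hlt : term_order lt.
Local Notation S := {mpoly k[n]}.
Variable J : S -> Prop.
Hypothesis HJ : is_homogeneous_ideal J.
Local Notation LMJ := (LM lt J).
Local Notation nfm := (nfm lt J).

Definition NF := ext nfm.

Lemma NF_sub p : J (p - NF p).
Proof.
have -> : p - NF p = \sum_(m <- msupp p) p@_m *: ('X_[m] - nfm m).
  rewrite (eq_bigr (fun m => p@_m *: 'X_[m] - p@_m *: nfm m));
    last by move=> m _; rewrite scalerBr.
  by rewrite sumrB -(mpolyE p).
apply: (Isum (HJi HJ)) => m _; apply: (IZ (HJi HJ)).
by case: (nfm_spec Hlt HJ m).
Qed.

Lemma nfm_le v w : w \in msupp (nfm v) -> le_t lt w v.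
Proof. by case: (nfm_spec Hlt HJ v) => h _ _ /h []. Qed.

Lemma nfm_diag v : (nfm v)@_v = if pb (LMJ v) then 0 else 1.
Proof. by case: (nfm_spec Hlt HJ v). Qed.

Lemma NF_supp p w : w \in msupp (NF p) ->
  ~ LMJ w /\ exists2 m, m \in msupp p & (le_t lt w m /\ mdeg w = mdeg m).
Proof.
rewrite mcoeff_msupp => /ext_supp [v vp wv].
have [h _ _] := nfm_spec Hlt HJ v; have [a1 a2 a3] := h _ wv.
by split => //; exists v.
Qed.

Lemma NF_J p : J p -> NF p = 0.
Proof.
move=> Jp; apply/eqP/negP => /negP nz.
have JN : J (NF p).
  have -> : NF p = p - (p - NF p) by rewrite subKr.
  by apply: (IB (HJi HJ)) => //; apply: NF_sub.
have [m hm] := lead_exists Hlt nz.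
have [nl _] := NF_supp (proj1 hm).
by apply: nl; exists (NF p).
Qed.

Lemma NF_lin a p q : NF (a *: p + q) = a *: NF p + NF q.
Proof. exact: ext_lin. Qed.

Definition nfm0 (v : 'X_{1..n}) : S := if pb (LMJ v) then 0 else 'X_[v].
Definition NF0 := ext nfm0.

Lemma nfm0_le v w : w \in msupp (nfm0 v) -> le_t lt w v.
Proof.
rewrite /nfm0; case: pb; first by rewrite msupp0.
by move/mem_msuppXP => ->; apply: le_t_refl.
Qed.

Lemma nfm0_diag v : (nfm0 v)@_v = if pb (LMJ v) then 0 else 1.
Proof. by rewrite /nfm0; case: pb; rewrite ?mcoeff0 ?mcoeffX ?eqxx. Qed.

Lemma NF0_coef p u : (NF0 p)@_u = if pb (LMJ u) then 0 else p@_u.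
Proof.
rewrite /NF0 ext_coef (sum_pick_in (i := u)) ?msupp_uniq //.
  case: (boolP (u \in msupp p)) => up; first by rewrite nfm0_diag; case: pb; rewrite ?mulr0 ?mulr1.
  by rewrite (memN_msupp_eq0 up); case: pb.
move=> j _ ne; rewrite /nfm0; case: pb; rewrite ?mcoeff0 ?mulr0 //.
by rewrite mcoeffX (negbTE ne) mulr0.
Qed.

End PartD.


Section PartE.
Variables (k : fieldType) (n : nat) (lt : rel 'X_{1..n}).
Hypothesis Hlt : term_order lt.
Local Notation S := {mpoly k[n]}.

Lemma le_t_anti a b : le_t lt a b -> le_t lt b a -> a = b.
Proof.
rewrite /le_t => /orP[/eqP//|h1] /orP[/eqP//|h2].
by have := tl_trans Hlt h1 h2; rewrite (negbTE (tlxx Hlt _)).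
Qed.

Definition Lsum d : S := (\sum_(i < n) 'X_i) ^+ d.
Definition lc (c : 'I_n -> k) : S := \sum_(i < n) c i *: 'X_i.
Definition cpow (c : 'I_n -> k) (b : 'X_{1..n}) : k := \prod_(i < n) c i ^+ b i.

Lemma lc_pow c d :
  lc c ^+ d = \sum_(b <- msupp (Lsum d)) ((Lsum d)@_b * cpow c b) *: 'X_[b].
Proof.
pose t := [tuple c i *: ('X_i : S) | i < n].
have e : lc c = (\sum_(i < n) 'X_i) \mPo t.
  rewrite raddf_sum /=; apply: eq_bigr => i _.
  rewrite comp_mpolyXU -[t`_i](tnth_nth 0) /t.
  by symmetry; apply: (tnth_mktuple (fun i0 => c i0 *: ('X_i0 : S))).
rewrite e -rmorphXn /= comp_mpolyE /Lsum; apply: eq_bigr => b _.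
have P : \prod_(i < n) tnth t i ^+ b i = cpow c b *: 'X_[b].
  rewrite (eq_bigr (fun i => c i ^+ b i *: 'X_i ^+ b i)).
    by rewrite scaler_prod -mpolyXE_id.
  move=> i _; rewrite -exprZn; congr (GRing.exp _ _).
  exact: (tnth_mktuple (fun i0 => c i0 *: ('X_i0 : S))).
by rewrite P scalerA.
Qed.

Definition LowP (q : S) (u : 'X_{1..n}) (s : k) :=
  (forall b, b \in msupp q -> le_t lt u b) /\ q@_u = s.
Definition OnlyP (q : S) (u : 'X_{1..n}) := forall b, b \in msupp q -> b = u.

Lemma LowP0 u : LowP 0 u 0.
Proof. by split; [move=> b; rewrite msupp0 | rewrite mcoeff0]. Qed.
Lemma LowP1 : LowP 1 0%MM 1.
Proof.
split; last by rewrite mcoeff1 eqxx.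
by move=> b; rewrite msupp1 inE => /eqP ->; apply: le_t_refl.
Qed.
Lemma LowPD q1 q2 u s1 s2 : LowP q1 u s1 -> LowP q2 u s2 -> LowP (q1 + q2) u (s1 + s2).
Proof.
move=> [h1 e1] [h2 e2]; split; last by rewrite mcoeffD e1 e2.
by move=> b /msuppD_le; rewrite mem_cat => /orP[/h1|/h2].
Qed.
Lemma LowPZ a q u s : LowP q u s -> LowP (a *: q) u (a * s).
Proof. by move=> [h e]; split; [move=> b /msuppZ_le /h | rewrite mcoeffZ e]. Qed.
Lemma LowP_sign (b : bool) q u s : LowP q u s -> LowP ((-1) ^+ b * q) u ((-1) ^+ b * s).
Proof.
case: b => h; last by rewrite expr0 !mul1r.
by rewrite expr1 !mulN1r -scaleN1r -[- s]mulN1r; apply: LowPZ.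
Qed.

Lemma LowPM q1 q2 u1 u2 s1 s2 : LowP q1 u1 s1 -> LowP q2 u2 s2 ->
  LowP (q1 * q2) (u1 + u2)%MM (s1 * s2).
Proof.
move=> [h1 e1] [h2 e2]; split.
  move=> b /msuppM_le /allpairsP [[b1 b2] /= [b1s b2s ->]].
  by apply: (le_t_add Hlt); [apply: h1 | apply: h2].
rewrite mpolyME big_allpairs raddf_sum /=.
rewrite (sum_pick_in (i := u1)) ?msupp_uniq //.
- case: (boolP (u1 \in msupp q1)) => u1s; last by rewrite -e1 (memN_msupp_eq0 u1s) mul0r.
  rewrite raddf_sum /= (sum_pick_in (i := u2)) ?msupp_uniq //.
  + case: (boolP (u2 \in msupp q2)) => u2s; last by rewrite -e2 (memN_msupp_eq0 u2s) mulr0.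
    by rewrite mcoeffZ mcoeffX eqxx mulr1 e1 e2.
  + move=> b2 b2s ne; rewrite mcoeffZ mcoeffX.
    case: eqP => [e|]; last by rewrite mulr0.
    have [_ e'] := le_t_add_eq Hlt (h1 _ u1s) (h2 _ b2s) (esym e).
    by move: ne; rewrite e' eqxx.
- move=> b1 b1s ne; rewrite raddf_sum big1_seq //= => b2 b2s.
  rewrite mcoeffZ mcoeffX; case: eqP => [e|]; last by rewrite mulr0.
  have [e' _] := le_t_add_eq Hlt (h1 _ b1s) (h2 _ b2s) (esym e).
  by move: ne; rewrite e' eqxx.
Qed.

Lemma LowP_sum (I : Type) (r : seq I) (F : I -> S) u (s : I -> k) :
  (forall i, LowP (F i) u (s i)) ->
  LowP (\sum_(i <- r) F i) u (\sum_(i <- r) s i).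
Proof.
move=> h; elim: r => [|x r IH]; rewrite ?big_nil ?big_cons; first exact: LowP0.
exact: LowPD.
Qed.

Lemma LowP_prod (I : Type) (r : seq I) (F : I -> S) (u : I -> 'X_{1..n}) (s : I -> k) :
  (forall i, LowP (F i) (u i) (s i)) ->
  LowP (\prod_(i <- r) F i) (\sum_(i <- r) u i)%MM (\prod_(i <- r) s i).
Proof.
move=> h; elim: r => [|x r IH]; rewrite ?big_nil ?big_cons; first exact: LowP1.
exact: LowPM.
Qed.

Lemma OnlyP0 u : OnlyP 0 u. Proof. by move=> b; rewrite msupp0. Qed.
Lemma OnlyP1 : OnlyP 1 0%MM. Proof. by move=> b; rewrite msupp1 inE => /eqP. Qed.
Lemma OnlyPD q1 q2 u : OnlyP q1 u -> OnlyP q2 u -> OnlyP (q1 + q2) u.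
Proof. by move=> h1 h2 b /msuppD_le; rewrite mem_cat => /orP[/h1|/h2]. Qed.
Lemma OnlyP_sign (b : bool) q u : OnlyP q u -> OnlyP ((-1) ^+ b * q) u.
Proof.
case: b => h; last by rewrite expr0 mul1r.
by rewrite expr1 mulN1r => c; rewrite (perm_mem (msuppN _)); apply: h.
Qed.
Lemma OnlyPM q1 q2 u1 u2 : OnlyP q1 u1 -> OnlyP q2 u2 -> OnlyP (q1 * q2) (u1 + u2)%MM.
Proof.
move=> h1 h2 b /msuppM_le /allpairsP [[b1 b2] /= [b1s b2s ->]].
by rewrite (h1 _ b1s) (h2 _ b2s).
Qed.
Lemma OnlyP_sum (I : Type) (r : seq I) (F : I -> S) u :
  (forall i, OnlyP (F i) u) -> OnlyP (\sum_(i <- r) F i) u.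
Proof.
move=> h; elim: r => [|x r IH]; rewrite ?big_nil ?big_cons; first exact: OnlyP0.
exact: OnlyPD.
Qed.
Lemma OnlyP_prod (I : Type) (r : seq I) (F : I -> S) (u : I -> 'X_{1..n}) :
  (forall i, OnlyP (F i) (u i)) -> OnlyP (\prod_(i <- r) F i) (\sum_(i <- r) u i)%MM.
Proof.
move=> h; elim: r => [|x r IH]; rewrite ?big_nil ?big_cons; first exact: OnlyP1.
exact: OnlyPM.
Qed.

Lemma Only_Low q u s : OnlyP q u -> LowP q u s -> q = s *: 'X_[u].
Proof.
move=> ho [_ e]; apply/mpolyP => b; rewrite mcoeffZ mcoeffX.
case: (eqVneq u b) => [<-|ne]; first by rewrite mulr1 e.
rewrite mulr0; apply: memN_msupp_eq0; apply/negP => /ho eb.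
by move: ne; rewrite eb eqxx.
Qed.

Lemma det_Low r (A : 'M[S]_r) (ms us : 'I_r -> 'X_{1..n}) (s : 'I_r -> 'I_r -> k) :
  (forall a b, LowP (A a b * 'X_[ms a]) (us b) (s a b)) ->
  LowP (\det A * 'X_[\sum_a ms a]) (\sum_b us b)%MM (\det (\matrix_(a, b) s a b)).
Proof.
move=> h.
have -> : \det (\matrix_(a, b) s a b) = \sum_(sg : 'S_r) (-1) ^+ sg * \prod_a s a (sg a).
  rewrite /determinant; apply: eq_bigr => sg _; congr (_ * _).
  by apply: eq_bigr => a _; rewrite mxE.
rewrite /determinant mulr_suml; apply: LowP_sum => sg.
rewrite -mulrA; apply: LowP_sign.
rewrite -mprodXE -big_split /=.
have -> : (\sum_b us b)%MM = (\sum_a us (sg a))%MM.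
  by rewrite (reindex_inj (@perm_inj _ sg)).
by apply: LowP_prod => a; apply: h.
Qed.

Lemma det_Only r (A : 'M[S]_r) (ms us : 'I_r -> 'X_{1..n}) :
  (forall a b, OnlyP (A a b * 'X_[ms a]) (us b)) ->
  OnlyP (\det A * 'X_[\sum_a ms a]) (\sum_b us b)%MM.
Proof.
move=> h; rewrite /determinant mulr_suml; apply: OnlyP_sum => sg.
rewrite -mulrA; apply: OnlyP_sign.
rewrite -mprodXE -big_split /=.
have -> : (\sum_b us b)%MM = (\sum_a us (sg a))%MM.
  by rewrite (reindex_inj (@perm_inj _ sg)).
by apply: OnlyP_prod => a; apply: h.
Qed.

End PartE.

Section PartF.
Variables (k : fieldType) (n : nat) (lt : rel 'X_{1..n}).
Hypothesis Hlt : term_order lt.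
Local Notation S := {mpoly k[n]}.
Variable J : S -> Prop.
Local Notation LMJ := (LM lt J).
Variable d : nat.
Local Notation L := (@Lsum k n d).

Definition Ep (G : 'X_{1..n} -> S) (g : S) (u : 'X_{1..n}) : S :=
  \sum_(b <- msupp L) (L@_b * (ext G ('X_[b] * g))@_u) *: 'X_[b].

Lemma Ep_coef G g u b : (Ep G g u)@_b = L@_b * (ext G ('X_[b] * g))@_u.
Proof.
rewrite /Ep (mcoeff_sumX predT) ?msupp_uniq //= andbT.
by case: (boolP (b \in msupp L)) => // /memN_msupp_eq0 ->; rewrite mul0r.
Qed.

Lemma Ep_eval G g u c : meval c (Ep G g u) = (ext G (lc c ^+ d * g))@_u.
Proof.
rewrite /Ep raddf_sum lc_pow mulr_suml ext_sum raddf_sum /=.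
apply: eq_bigr => b _ /=.
by rewrite mevalZ mevalX -scalerAl extZ mcoeffZ /cpow mulrAC.
Qed.

Section Low.
Variable G : 'X_{1..n} -> S.
Hypothesis G1 : forall v w, w \in msupp (G v) -> le_t lt w v.
Hypothesis G2 : forall v, (G v)@_v = if pb (LMJ v) then 0 else 1.

Definition svl (m u : 'X_{1..n}) : k :=
  if (m <= u)%MM then L@_(u - m)%MM * (if pb (LMJ u) then 0 else 1) else 0.

Lemma Ep_Low g m u : g@_m = 1 -> (forall w, w \in msupp g -> le_t lt w m) ->
  LowP lt (Ep G g u * 'X_[m]) u (svl m u).
Proof.
move=> gm gl; split.
  move=> b; rewrite (perm_mem (msuppMX _ _)) => /mapP [b' b's ->].
  move: b's; rewrite mcoeff_msupp Ep_coef mulf_eq0 negb_or => /andP [_ h].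
  have [v vs uv] := ext_supp h.
  have luv := G1 uv.
  move: vs; rewrite mulrC (perm_mem (msuppMX _ _)) => /mapP [w ws ev].
  have lw := gl _ ws.
  rewrite addmC; apply: (le_t_trans Hlt luv); rewrite ev.
  by apply: (le_t_add Hlt) => //; apply: le_t_refl.
rewrite /svl; case: (boolP (m <= u)%MM) => mu; last first.
  apply: memN_msupp_eq0; rewrite (perm_mem (msuppMX _ _)).
  by apply/mapP => [[b' _ e]]; move: mu; rewrite e lem_addr.
have eu : u = (m + (u - m))%MM by rewrite addmC submK.
have -> : (Ep G g u * 'X_[m])@_u = (Ep G g u)@_(u - m)%MM.
  by rewrite -(mcoeffMX (Ep G g u) m (u - m)%MM) -eu.
rewrite Ep_coef; congr (_ * _).
set b := (u - m)%MM.
have hu : ('X_[b] * g)@_u = 1.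
  by rewrite mulrC eu addmC mcoeffMX gm.
rewrite ext_coef (sum_pick_in (i := u)) ?msupp_uniq //.
  by rewrite mcoeff_msupp hu oner_eq0 /= mul1r G2.
move=> v vs ne.
suff -> : (G v)@_u = 0 by rewrite mulr0.
apply/memN_msupp_eq0/negP => uv.
have l1 := G1 uv.
move: vs; rewrite mulrC (perm_mem (msuppMX _ _)) => /mapP [w ws ev].
have l2 : le_t lt v u.
  rewrite ev eu [(m + _)%MM]addmC; apply: (le_t_add Hlt); first exact: le_t_refl.
  exact: gl.
by move: ne; rewrite (le_t_anti Hlt l1 l2) eqxx.
Qed.
End Low.

Lemma Ep0_Only m u : OnlyP (Ep (nfm0 lt J) 'X_[m] u * 'X_[m]) u.
Proof.
move=> b; rewrite (perm_mem (msuppMX _ _)) => /mapP [b' b's ->].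
move: b's; rewrite mcoeff_msupp Ep_coef mulf_eq0 negb_or => /andP [_].
rewrite -mpolyXD extX /nfm0; case: pb; first by rewrite mcoeff0 eqxx.
rewrite mcoeffX; case: (eqVneq (b' + m)%MM u) => [<- _|_]; first by rewrite addmC.
by rewrite eqxx.
Qed.

End PartF.

Section NonRoot.
Variable k : fieldType.
Hypothesis hc : [pchar k] =i pred0.

Lemma natr_inj_k (i j : nat) : (i%:R : k) = j%:R -> i = j.
Proof.
have h := (pcharf0P k).1 hc.
wlog le : i j / (i <= j)%N.
  by move=> W e; case: (leqP i j) => [l|/ltnW l]; [apply: W | apply/esym/W].
move/eqP; rewrite eq_sym -subr_eq0 -natrB // h subn_eq0 => le2.
by apply/eqP; rewrite eqn_leq le le2.
Qed.

Lemma poly_nonroot (p : {poly k}) : p != 0 -> exists x, ~~ root p x.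
Proof.
move=> nz; set rs := [seq (i%:R : k) | i <- iota 0 (size p)].
have ur : uniq rs.
  rewrite map_inj_in_uniq ?iota_uniq // => i j _ _; exact: natr_inj_k.
have : ~~ all (root p) rs.
  apply/negP => allr; have := max_poly_roots nz allr ur.
  by rewrite size_map size_iota ltnn.
by case/allPn => x _ hx; exists x.
Qed.

Lemma lift_max_eq n (i : 'I_n) : lift ord_max i = widen_ord (leqnSn n) i.
Proof. by apply: val_inj; rewrite /= /bump leqNgt ltn_ord. Qed.

Lemma mpoly_nonroot n (P : {mpoly k[n]}) : P != 0 -> exists v : 'I_n -> k, P.@[v] != 0.
Proof.
elim: n P => [|n IH] P nz.
  exists (fun _ => 0); rewrite [P]nvar0_mpolyC mevalC.
  by move: nz; rewrite {1}[P]nvar0_mpolyC mpolyC_eq0.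
pose r (m : 'X_{1..n.+1}) : 'X_{1..n} := [multinom m (lift ord_max i) | i < n].
have rinj m m' : r m = r m' -> m ord_max = m' ord_max -> m = m'.
  move=> e1 e2; apply/mnmP => i; case: (unliftP ord_max i) => [j ->|->] //.
  by have := congr1 (fun x : 'X_{1..n} => x j) e1; rewrite /r !mnmE.
pose Pj (j : nat) : {mpoly k[n]} :=
  \sum_(m <- msupp P | m ord_max == j) P@_m *: 'X_[r m].
have [m0 m0s] : exists m0, m0 \in msupp P.
  have : msupp P != [::] by rewrite msupp_eq0.
  by case e: (msupp P) => [|x s] // _; exists x; rewrite inE eqxx.
have Pjnz : Pj (m0 ord_max) != 0.
  apply/eqP => /(congr1 (mcoeff (r m0))); rewrite mcoeff0 raddf_sum /= big_mkcond /=.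
  rewrite (sum_pick_in (i := m0)) ?msupp_uniq // ?m0s ?eqxx.
    by rewrite mcoeffZ mcoeffX eqxx mulr1 => e; move: m0s; rewrite mcoeff_msupp e eqxx.
  move=> j js ne; case: eqP => // e; rewrite mcoeffZ mcoeffX.
  case: eqP => [e'|]; last by rewrite mulr0.
  by move: ne; rewrite (rinj _ _ e' e) eqxx.
have [v hv] := IH _ Pjnz.
pose q : {poly k} :=
  \sum_(m <- msupp P) (P@_m * ('X_[r m]).@[v]) *: 'X^(m ord_max).
have qnz : q != 0.
  apply/eqP => /(congr1 (fun p : {poly k} => p`_(m0 ord_max))).
  rewrite coef0 coef_sum => e; move: hv; rewrite -e.
  rewrite /Pj raddf_sum /= big_mkcond /=; apply/negP; rewrite negbK; apply/eqP.
  apply: eq_bigr => m _; rewrite coefZ coefXn eq_sym.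
  by case: eqP; rewrite ?mulr1 ?mulr0 // mevalZ.
have [t ht] := poly_nonroot qnz.
exists (fun i => if unlift ord_max i is Some j then v j else t).
suff -> : P.@[fun i => if unlift ord_max i is Some j then v j else t] = q.[t] by [].
rewrite mevalE /q horner_sum; apply: eq_bigr => m _.
rewrite hornerZ hornerXn -mulrA; congr (_ * _).
rewrite big_ord_recr /= unlift_none mevalX; congr (_ * _).
apply: eq_bigr => i _; rewrite -lift_max_eq liftK /r mnmE //.
Qed.
End NonRoot.

Section PartH1.
Variables (k : fieldType) (n : nat) (lt : rel 'X_{1..n}).
Hypothesis Hlt : term_order lt.
Local Notation S := {mpoly k[n]}.

Lemma ideal_gen_ideal (G : S -> Prop) : is_ideal (ideal_gen G).
Proof.
split.
- by exists [::]; split; [move=> x; rewrite in_nil | rewrite big_nil].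
- move=> f g [s1 [h1 ->]] [s2 [h2 ->]]; exists (s1 ++ s2); split; last by rewrite big_cat.
  by move=> x; rewrite mem_cat => /orP[/h1|/h2].
- move=> r f [s [h ->]]; exists [seq (r * x.1, x.2) | x <- s]; split.
    by move=> x /mapP [y ys ->] /=; exact: (h _ ys).
  by rewrite big_map mulr_sumr; apply: eq_bigr => x _; rewrite mulrA.
Qed.

Lemma init_ideal (P : S -> Prop) : is_ideal (initial_ideal lt P).
Proof. exact: ideal_gen_ideal. Qed.

Lemma init_NF0 (J : S -> Prop) f : is_ideal J ->
  (initial_ideal lt J f <-> NF0 lt J f = 0).
Proof.
move=> HJ; rewrite init_char //; split.
  move=> h; apply/mpolyP => u; rewrite NF0_coef mcoeff0.
  case: (boolP (u \in msupp f)) => us; first by rewrite (introT (pbP _) (h _ us)).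
  by rewrite (memN_msupp_eq0 us); case: pb.
move=> e u us; apply/pbP; move: (congr1 (mcoeff u) e); rewrite NF0_coef mcoeff0.
by case: pb => // fu; move: us; rewrite mcoeff_msupp fu eqxx.
Qed.

Lemma lc_homog (c : 'I_n -> k) : lc c \is 1.-homog.
Proof.
rewrite /lc; apply: rpred_sum => j _; apply: dhomogZ.
by rewrite dhomogX /= mdeg1.
Qed.

Lemma lc_of_homog1 (l : S) : l \is 1.-homog -> l = lc (fun j => l@_U_(j)).
Proof.
move=> hl; apply/mpolyP => m; rewrite /lc raddf_sum /=.
case: (eqVneq (mdeg m) 1%N) => dm.
  have /mdeg1P [j /eqP ->] : mdeg m == 1%N by rewrite dm.
  rewrite (bigD1 j) //= big1 ?addr0; first by rewrite mcoeffZ mcoeffX eqxx mulr1.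
  by move=> j' ne; rewrite mcoeffZ mcoeffX eq_mnm1 (negbTE ne) mulr0.
rewrite (dhomog_nemf_coeff hl dm) big1 // => j _.
rewrite mcoeffZ mcoeffX; case: eqP => [e|]; last by rewrite mulr0.
by move: dm; rewrite -e mdeg1 eqxx.
Qed.

Section Gsel.
Variable I : S -> Prop.
Hypothesis HI : is_homogeneous_ideal I.

Definition gspec m (g : S) := [/\ I g, g \is (mdeg m).-homog, g@_m = 1 &
  forall w, w \in msupp g -> w != m -> lt w m].
Definition gsel m : S := epsilon (inhabits 0) (gspec m).
Lemma gsel_spec m : LM lt I m -> gspec m (gsel m).
Proof. by move=> h; apply: epsilon_spec; apply: lead_homog. Qed.
Lemma gsel_le m : LM lt I m -> forall w, w \in msupp (gsel m) -> le_t lt w m.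
Proof.
move=> h w ws; case: (gsel_spec h) => _ _ _ hl.
by rewrite /le_t; case: (eqVneq w m) => //= ne; apply: hl.
Qed.
End Gsel.

Lemma rk_max e v : (rk lt e v < #|{: 'X_{1..n < e.+1}}|.+1)%N.
Proof. by rewrite ltnS; apply: max_card. Qed.

Section Span.
Variables (I J : S -> Prop).
Hypothesis HI : is_homogeneous_ideal I.
Hypothesis HJ : is_homogeneous_ideal J.
Hypothesis HJI : forall f, J f -> I f.
Variable i : nat.

Definition Eset : {set 'X_{1..n < i.+1}} :=
  [set m : 'X_{1..n < i.+1} | (mdeg m == i) && pb (LM lt I m) && ~~ pb (LM lt J m)].
Local Notation rE := #|Eset|.
Definition mE (a : 'I_rE) : 'X_{1..n} := enum_val a.
Definition gE (a : 'I_rE) : S := gsel I (mE a).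

Lemma mE_prop a : [/\ mdeg (mE a) = i, LM lt I (mE a) & ~ LM lt J (mE a)].
Proof.
have := enum_valP a; rewrite inE /mE => /andP [/andP [/eqP h1 /pbP h2] /pbP h3].
by split.
Qed.

Lemma mE_inj : injective mE.
Proof. by move=> a b /val_inj /enum_val_inj. Qed.

Lemma mE_surj w : mdeg w = i -> LM lt I w -> ~ LM lt J w -> exists a, mE a = w.
Proof.
move=> dw hI hJ; have hb : (mdeg w < i.+1)%N by rewrite dw.
have xin : BMultinom hb \in Eset.
  by rewrite inE /= dw eqxx /=; apply/andP; split; apply/pbP.
by exists (enum_rank_in xin (BMultinom hb)); rewrite /mE enum_rankK_in.
Qed.

Definition Sp (q : S) := exists al : 'rV[k]_rE, q = \sum_a al 0 a *: gE a.

Lemma Sp0 : Sp 0.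
Proof. by exists 0; rewrite big1 // => a _; rewrite mxE scale0r. Qed.
Lemma SpD q1 q2 : Sp q1 -> Sp q2 -> Sp (q1 + q2).
Proof.
move=> [a1 ->] [a2 ->]; exists (a1 + a2); rewrite -big_split /=.
by apply: eq_bigr => a _; rewrite mxE scalerDl.
Qed.
Lemma Sp_g a (c : k) : Sp (c *: gE a).
Proof.
exists (c *: delta_mx 0 a); rewrite (bigD1 a) //= big1 ?addr0.
  by rewrite !mxE !eqxx mulr1.
by move=> b ne; rewrite !mxE (negbTE ne) andbF mulr0 scale0r.
Qed.

Lemma span_red f : I f -> f \is i.-homog -> exists q, Sp q /\ J (f - q).
Proof.
have HJi : is_ideal J by case: HJ.
have HIi : is_ideal I by case: HI.
move=> If hf.
suff : forall K f, I f -> f \is i.-homog ->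
    (forall w, w \in msupp f -> (rk lt i w < K)%N) -> exists q, Sp q /\ J (f - q).
  by move=> h; apply: (h _ f If hf) => w _; apply: rk_max.
elim=> [|K IH] {}f {}If {}hf hK; case: (eqVneq f 0) => [->|nz].
- by exists 0; split; [apply: Sp0 | rewrite subr0; apply: (I0 HJi)].
- by have [w [ws _]] := lead_exists Hlt nz; have := hK _ ws.
- by exists 0; split; [apply: Sp0 | rewrite subr0; apply: (I0 HJi)].
have [w hw] := lead_exists Hlt nz; have [ws wl] := hw.
have dw : mdeg w = i by apply: (dhomog_mf hf).
have hwI : LM lt I w by exists f.
set c := f@_w.
have step : forall h, I h -> h \is i.-homog -> h@_w = 1 ->
    (forall w', w' \in msupp h -> w' != w -> lt w' w) ->
    exists q, Sp q /\ J (f - c *: h - q).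
  move=> h Ih hh h1 hl; apply: IH.
  - by apply: (IB HIi) => //; apply: (IZ HIi).
  - by apply: rpredB => //; apply: rpredZ.
  move=> w' w's.
  have ne : w' != w.
    apply: contraTneq w's => ->.
    by rewrite mcoeff_msupp mcoeffB mcoeffZ h1 mulr1 subrr eqxx.
  have lw : lt w' w.
    move: w's => /msuppB_le; rewrite mem_cat => /orP[/wl|/msuppZ_le /hl]; exact.
  have dw' : mdeg w' = i.
    by apply: (dhomog_mf (p := f - c *: h)) => //; apply: rpredB => //; apply: rpredZ.
  have := hK _ ws; rewrite ltnS => le; exact: leq_trans (rk_lt Hlt dw' lw) le.
case: (pbP (LM lt J w)) => hwJ.
  have [Jh hh h1 hl] := gsel_spec HJ hwJ.
  rewrite dw in hh.
  have [q [Sq Jq]] := step _ (HJI Jh) hh h1 hl.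
  exists q; split => //.
  have -> : f - q = (f - c *: gsel J w - q) + c *: gsel J w.
    by rewrite addrAC subrK.
  by apply: (ID HJi) => //; apply: (IZ HJi).
have [a ea] := mE_surj dw hwI hwJ.
have [Ih hh h1 hl] := gsel_spec HI hwI.
rewrite dw in hh.
have [q [Sq Jq]] := step _ Ih hh h1 hl.
exists (q + c *: gE a); split; first by apply: SpD => //; apply: Sp_g.
by rewrite /gE ea opprD addrA addrAC.
Qed.

End Span.
End PartH1.

Lemma mpolyX_neq0 (k : fieldType) n (m : 'X_{1..n}) : ('X_[m] : {mpoly k[n]}) != 0.
Proof.
apply/eqP => /(congr1 (mcoeff m)); rewrite mcoeffX eqxx mcoeff0 => /eqP.
by rewrite oner_eq0.
Qed.

Lemma NF_B (k : fieldType) n (lt : rel 'X_{1..n}) (J : {mpoly k[n]} -> Prop) p q :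
  NF lt J (p - q) = NF lt J p - NF lt J q.
Proof. exact: extB. Qed.

Section Key.
Variables (k : fieldType) (n : nat) (lt : rel 'X_{1..n}).
Hypothesis Hlt : term_order lt.
Local Notation S := {mpoly k[n]}.
Variables (I J : S -> Prop).
Hypothesis HI : is_homogeneous_ideal I.
Hypothesis HJ : is_homogeneous_ideal J.
Hypothesis HJI : forall f, J f -> I f.
Variables (i d : nat).
Local Notation E := (Eset lt I J i).
Local Notation rE := #|E|.
Local Notation mEi := (@mE k n lt I J i).
Local Notation gEi := (@gE k n lt I J i).

Definition Vm (c : 'I_n -> k) N (us : 'I_N -> 'X_{1..n}) : 'M[k]_(rE, N) :=
  \matrix_(a, b) (NF lt J (lc c ^+ d * gEi a))@_(us b).
Definition W0m (c : 'I_n -> k) N (us : 'I_N -> 'X_{1..n}) : 'M[k]_(rE, N) :=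
  \matrix_(a, b) (NF0 lt J (lc c ^+ d * 'X_[mEi a]))@_(us b).
Definition VP N (us : 'I_N -> 'X_{1..n}) : 'M[S]_(rE, N) :=
  \matrix_(a, b) Ep d (nfm lt J) (gEi a) (us b).
Definition W0P N (us : 'I_N -> 'X_{1..n}) : 'M[S]_(rE, N) :=
  \matrix_(a, b) Ep d (nfm0 lt J) 'X_[mEi a] (us b).

Lemma VP_eval c N us : map_mx (meval c) (@VP N us) = Vm c us.
Proof. by apply/matrixP => a b; rewrite !mxE Ep_eval. Qed.
Lemma W0P_eval c N us : map_mx (meval c) (@W0P N us) = W0m c us.
Proof. by apply/matrixP => a b; rewrite !mxE Ep_eval. Qed.

Lemma minor_nz N (us : 'I_N -> 'X_{1..n}) r (f : 'I_r -> 'I_rE) (g : 'I_r -> 'I_N) c' :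
  rowsub f (colsub g (W0m c' us)) \in unitmx ->
  \det (rowsub f (colsub g (VP us))) != 0.
Proof.
move=> hu.
pose ms a := mEi (f a); pose uss b := us (g b).
have LMa a : LM lt I (ms a) by case: (mE_prop (f a)).
have hLV : forall a b, LowP lt ((rowsub f (colsub g (VP us))) a b * 'X_[ms a]) (uss b)
     (svl lt J d (ms a) (uss b)).
  move=> a b; rewrite !mxE; apply: (Ep_Low Hlt).
  - by move=> v w; apply: (nfm_le Hlt HJ).
  - exact: (nfm_diag Hlt HJ).
  - by case: (gsel_spec HI (LMa a)).
  - exact: (gsel_le HI (LMa a)).
have hLW : forall a b, LowP lt ((rowsub f (colsub g (W0P us))) a b * 'X_[ms a]) (uss b)
     (svl lt J d (ms a) (uss b)).
  move=> a b; rewrite !mxE; apply: (Ep_Low Hlt).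
  - by move=> v w; apply: nfm0_le.
  - exact: nfm0_diag.
  - by rewrite mcoeffX eqxx.
  - by move=> w /mem_msuppXP <-; apply: le_t_refl.
have hOW : forall a b, OnlyP ((rowsub f (colsub g (W0P us))) a b * 'X_[ms a]) (uss b).
  by move=> a b; rewrite !mxE; apply: Ep0_Only.
have LV := det_Low Hlt hLV; have LW := det_Low Hlt hLW; have OW := det_Only hOW.
have eW := Only_Low OW LW.
have nzW : \det (rowsub f (colsub g (W0P us))) != 0.
  apply: contraTneq hu => e0; rewrite unitmxE unitfE.
  have -> : rowsub f (colsub g (W0m c' us)) =
      map_mx (meval c') (rowsub f (colsub g (W0P us))).
    by rewrite -W0P_eval; apply/matrixP => a b; rewrite !mxE.
  by rewrite det_map_mx e0 raddf0 eqxx.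
set Sv := \det (\matrix_(a, b) svl lt J d (ms a) (uss b)) in LV eW.
have Snz : Sv != 0.
  apply: contra nzW => /eqP S0.
  have : \det (rowsub f (colsub g (W0P us))) * 'X_[(\sum_a ms a)%MM] = 0.
    by rewrite eW S0 scale0r.
  by move/eqP; rewrite mulf_eq0 (negbTE (mpolyX_neq0 _ _)) orbF.
apply/eqP => V0; case: LV => _; rewrite V0 mul0r mcoeff0 => /esym/eqP.
by rewrite (negbTE Snz).
Qed.


Lemma HIi : is_ideal I. Proof. by case: HI. Qed.
Lemma HJi' : is_ideal J. Proof. by case: HJ. Qed.

Lemma coef_comb (al : 'I_rE -> k) a :
  (\sum_a' al a' *: ('X_[mEi a'] : S))@_(mEi a) = al a.
Proof.
rewrite raddf_sum (bigD1 a) //= big1 ?addr0; first by rewrite mcoeffZ mcoeffX eqxx mulr1.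
move=> a' ne; rewrite /= mcoeffZ mcoeffX.
case: eqP => [/mE_inj e|]; last by rewrite mulr0.
by move: ne; rewrite e eqxx.
Qed.

Lemma coef_comb0 (al : 'I_rE -> k) w : (forall a, mEi a != w) ->
  (\sum_a' al a' *: ('X_[mEi a'] : S))@_w = 0.
Proof.
move=> h; rewrite raddf_sum big1 // => a _ /=.
by rewrite mcoeffZ mcoeffX (negbTE (h a)) mulr0.
Qed.

Lemma NF_comb (c : 'I_n -> k) (al : 'I_rE -> k) u :
  \sum_a al a * (NF lt J (lc c ^+ d * gEi a))@_u =
  (NF lt J (lc c ^+ d * \sum_a al a *: gEi a))@_u.
Proof.
rewrite mulr_sumr /NF ext_sum raddf_sum; apply: eq_bigr => a _ /=.
by rewrite -scalerAr extZ mcoeffZ.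
Qed.

Lemma NF_comb_gen (c : 'I_n -> k) r (al : 'I_r -> k) (G : 'I_r -> S) u :
  \sum_a al a * (NF lt J (lc c ^+ d * G a))@_u =
  (NF lt J (lc c ^+ d * \sum_a al a *: G a))@_u.
Proof.
rewrite mulr_sumr /NF ext_sum raddf_sum; apply: eq_bigr => a _ /=.
by rewrite -scalerAr extZ mcoeffZ.
Qed.

Lemma NF0_comb (c : 'I_n -> k) (al : 'I_rE -> k) u :
  \sum_a al a * (NF0 lt J (lc c ^+ d * 'X_[mEi a]))@_u =
  (NF0 lt J (lc c ^+ d * \sum_a al a *: 'X_[mEi a]))@_u.
Proof.
rewrite mulr_sumr /NF0 ext_sum raddf_sum; apply: eq_bigr => a _ /=.
by rewrite -scalerAr extZ mcoeffZ.
Qed.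

Lemma hom_lcd (c : 'I_n -> k) : lc c ^+ d \is d.-homog.
Proof. by have := dhomogMn d (lc_homog c); rewrite mul1n. Qed.

Lemma sub_map_mx (c : 'I_n -> k) r N (f : 'I_r -> 'I_rE) (g : 'I_r -> 'I_N) (M : 'M[S]_(rE, N)) :
  rowsub f (colsub g (map_mx (meval c) M)) = map_mx (meval c) (rowsub f (colsub g M)).
Proof. by apply/matrixP => a b; rewrite !mxE. Qed.

Local Notation CT := 'X_{1..n < (d + i).+1}.
Definition uA (b : 'I_#|{: CT}|) : 'X_{1..n} := enum_val b.

Lemma key_inj (c' : 'I_n -> k) :
  (forall f, initial_ideal lt I f -> f \is i.-homog ->
     initial_ideal lt J (lc c' ^+ d * f) -> initial_ideal lt J f) ->
  exists Q : S, Q != 0 /\ forall c, Q.@[c] != 0 ->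
    (forall f, I f -> f \is i.-homog -> J (lc c ^+ d * f) -> J f).
Proof.
move=> Hinj.
pose W := W0m c' uA.
have rfW : row_free W.
  apply: inj_row_free => v hv.
  pose f := \sum_a v 0 a *: ('X_[mEi a] : S).
  have Xin a : initial_ideal lt I 'X_[mEi a].
    apply/(init_char Hlt _ HIi) => m /mem_msuppXP <-.
    by case: (mE_prop a).
  have If : initial_ideal lt I f.
    by apply: (Isumf (init_ideal _ _)) => a; apply: (IZ (init_ideal _ _)).
  have hf : f \is i.-homog.
    apply: rpred_sum => a _; apply: dhomogZ; rewrite dhomogX /=.
    by case: (mE_prop a) => -> _ _.
  have hJ : initial_ideal lt J (lc c' ^+ d * f).
    apply/(init_NF0 Hlt _ HJi'); apply/mpolyP => u; rewrite NF0_coef mcoeff0.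
    case: (pbP (LM lt J u)) => // hu.
    have hp : lc c' ^+ d * f \is (d + i)%N.-homog by apply: dhomogM => //; apply: hom_lcd.
    case: (eqVneq (mdeg u) (d + i)) => du; last by apply: dhomog_nemf_coeff hp du.
    have hb : (mdeg u < (d + i).+1)%N by rewrite du.
    have := congr1 (fun M : 'rV_#|{: CT}| => M 0 (enum_rank (BMultinom hb))) hv.
    rewrite !mxE /=; under eq_bigr => a _ do rewrite mxE.
    rewrite NF0_comb /uA enum_rankK /= NF0_coef.
    by have -> : pb (LM lt J u) = false by apply/pbP.
  have := Hinj _ If hf hJ; move/(init_char Hlt _ HJi') => hJf.
  apply/rowP => a; rewrite mxE; apply/eqP/negP => /negP nz.
  have : mEi a \in msupp f by rewrite mcoeff_msupp /f coef_comb.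
  by move/hJf; case: (mE_prop a).
have rfWT : row_full W^T by rewrite /row_full mxrank_tr.
pose g := fullrankfun rfWT.
have hu : rowsub (fun a => a) (colsub g W) \in unitmx.
  have -> : rowsub (fun a => a) (colsub g W) = (rowsub g W^T)^T.
    by apply/matrixP => a b; rewrite !mxE.
  by rewrite unitmx_tr fullrowsub_unit.
exists (\det (rowsub (fun a => a) (colsub g (VP uA)))); split.
  exact: minor_nz hu.
move=> c hc f If hf Jf.
have uV : rowsub (fun a => a) (colsub g (Vm c uA)) \in unitmx.
  by rewrite unitmxE unitfE -VP_eval sub_map_mx det_map_mx.
have [q [[al eq] Jq]] := span_red Hlt HI HJ HJI If hf.
suff al0 : al = 0.
  by move: Jq; rewrite eq al0 big1 ?subr0 // => a _; rewrite mxE scale0r.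
have : al *m rowsub (fun a => a) (colsub g (Vm c uA)) = 0.
  apply/rowP => b; rewrite !mxE; under eq_bigr => a _ do rewrite !mxE.
  rewrite (NF_comb c (fun a => al 0 a)) -eq.
  have -> : lc c ^+ d * q = lc c ^+ d * f - lc c ^+ d * (f - q) by rewrite mulrBr subKr.
  rewrite NF_B (NF_J Hlt HJ Jf) (NF_J Hlt HJ (IM HJi' (lc c ^+ d) Jq)) subrr.
  by rewrite mcoeff0.
by move/eqP; rewrite mulmx_free_eq0 ?row_free_unit // => /eqP.
Qed.

Local Notation rF := #|Eset lt I J (i + d)|.
Definition uF (b : 'I_rF) : 'X_{1..n} := @mE k n lt I J (i + d) b.

Lemma NF0_B p q : NF0 lt J (p - q) = NF0 lt J p - NF0 lt J q.
Proof. exact: extB. Qed.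

Lemma key_surj (c' : 'I_n -> k) :
  (forall h, initial_ideal lt I h -> h \is (i + d)%N.-homog ->
     exists f, [/\ initial_ideal lt I f, f \is i.-homog &
                   initial_ideal lt J (h - lc c' ^+ d * f)]) ->
  exists Q : S, Q != 0 /\ forall c, Q.@[c] != 0 ->
    (forall h, I h -> h \is (i + d)%N.-homog ->
       exists f, [/\ I f, f \is i.-homog & J (h - lc c ^+ d * f)]).
Proof.
move=> Hsur.
pose W' := W0m c' uF.
have hx : forall b, exists x : 'rV[k]_rE, x *m W' = delta_mx 0 b.
  move=> b; have [du LIu nLJu] := mE_prop b.
  have Xu : initial_ideal lt I 'X_[uF b].
    by apply/(init_char Hlt _ HIi) => m /mem_msuppXP <-.
  have hXu : ('X_[uF b] : S) \is (i + d)%N.-homog by rewrite dhomogX /= /uF du.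
  have [f [If hf Jh]] := Hsur _ Xu hXu.
  exists (\row_a f@_(mEi a)).
  pose f' := \sum_a f@_(mEi a) *: ('X_[mEi a] : S).
  have Jff : initial_ideal lt J (f - f').
    apply/(init_char Hlt _ HJi') => w ws.
    case: (pbP (LM lt J w)) => // nw; exfalso.
    case: (boolP [exists a, mEi a == w]) => [/existsP [a /eqP ea]|/existsPn na].
      move: ws; rewrite mcoeff_msupp mcoeffB /f' -ea coef_comb.
      by rewrite subrr eqxx.
    move: ws; rewrite mcoeff_msupp mcoeffB /f' (coef_comb0 _ na) subr0 -mcoeff_msupp => ws.
    have LIw : LM lt I w by move/(init_char Hlt _ HIi): If; apply.
    have [a ea] := mE_surj (dhomog_mf hf ws) LIw nw.
    by move: (na a); rewrite ea eqxx.
  have e : NF0 lt J (lc c' ^+ d * f') = NF0 lt J 'X_[uF b].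
    have : initial_ideal lt J ('X_[uF b] - lc c' ^+ d * f').
      have -> : 'X_[uF b] - lc c' ^+ d * f' =
          ('X_[uF b] - lc c' ^+ d * f) + lc c' ^+ d * (f - f').
        by rewrite mulrBr addrA subrK.
      by apply: (ID (init_ideal _ _)) => //; apply: (IM (init_ideal _ _)).
    move/(init_NF0 Hlt _ HJi'); rewrite NF0_B => /eqP; rewrite subr_eq0 => /eqP.
    by move=> ->.
  apply/rowP => b'; rewrite !mxE; under eq_bigr => a _ do rewrite !mxE.
  rewrite (NF0_comb c' (fun a => f@_(mEi a))) -/f' e /NF0 extX /nfm0.
  have -> : pb (LM lt J (uF b)) = false by apply/pbP.
  rewrite mcoeffX eqxx /=; congr (GRing.natmul _ (nat_of_bool _)).
  by apply/eqP/eqP => [/mE_inj|->].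
pose xb b := epsilon (inhabits 0) (fun x : 'rV[k]_rE => x *m W' = delta_mx 0 b).
have xbP b : xb b *m W' = delta_mx 0 b by exact: (epsilon_spec (inhabits 0) (fun x : 'rV[k]_rE => x *m W' = delta_mx 0 b) (hx b)).
have rfW' : row_full W'.
  apply/row_fullP; exists (\matrix_(b, a) xb b 0 a); apply/matrixP => b b'.
  have := congr1 (fun M : 'rV_rF => M 0 b') (xbP b); rewrite !mxE eqxx /= => e.
  by rewrite eq_sym -e; apply: eq_bigr => a _; rewrite mxE.
pose f0 := fullrankfun rfW'.
have hu : rowsub f0 (colsub (fun b => b) W') \in unitmx.
  have -> : rowsub f0 (colsub (fun b => b) W') = rowsub f0 W'.
    by apply/matrixP => a b; rewrite !mxE.
  exact: fullrowsub_unit.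
exists (\det (rowsub f0 (colsub (fun b => b) (VP uF)))); split.
  exact: minor_nz hu.
move=> c hc h Ih hh.
pose M := rowsub f0 (colsub (fun b => b) (Vm c uF)).
have uM : M \in unitmx by rewrite /M unitmxE unitfE -VP_eval sub_map_mx det_map_mx.
pose y : 'rV[k]_rF := \row_b (NF lt J h)@_(uF b).
pose be := y *m invmx M.
pose fs := \sum_b be 0 b *: gEi (f0 b).
have Ifs : I fs.
  apply: (Isumf HIi) => b; apply: (IZ HIi).
  by case: (mE_prop (f0 b)) => _ h1 _; case: (gsel_spec HI h1).
have hfs : fs \is i.-homog.
  apply: rpred_sum => b _; apply: dhomogZ.
  case: (mE_prop (f0 b)) => h0 h1 _; case: (gsel_spec HI h1) => _ h2 _ _.
  by move: h2; rewrite h0.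
exists fs; split => //.
set p := h - lc c ^+ d * fs.
have hp : p \is (i + d)%N.-homog.
  apply: rpredB => //; rewrite addnC; apply: dhomogM => //; exact: hom_lcd.
have Ip : I p by apply: (IB HIi) => //; apply: (IM HIi).
suff z0 : NF lt J p = 0 by have := NF_sub Hlt HJ p; rewrite z0 subr0.
have zc : forall b', (NF lt J p)@_(uF b') = 0.
  move=> b'; rewrite /p NF_B mcoeffB.
  rewrite -(NF_comb_gen c (fun b => be 0 b) (fun b => gEi (f0 b))).
  have : (be *m M) 0 b' = y 0 b' by rewrite /be mulmxKV.
  rewrite !mxE => <-; apply/eqP; rewrite subr_eq0; apply/eqP.
  by apply: eq_bigr => b _; rewrite !mxE.
apply/eqP/negP => /negP nz.
have [w hw] := lead_exists Hlt nz.
have [nLJ [m ms [_ dwm]]] := NF_supp Hlt HJ (proj1 hw).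
have dw : mdeg w = (i + d)%N by rewrite dwm (dhomog_mf hp ms).
have IN : I (NF lt J p).
  have -> : NF lt J p = p - (p - NF lt J p) by rewrite subKr.
  by apply: (IB HIi) => //; apply: HJI; apply: NF_sub.
have LIw : LM lt I w by exists (NF lt J p).
have [b' eb'] := mE_surj dw LIw nLJ.
by move: (proj1 hw); rewrite mcoeff_msupp -eb' -/(uF b') zc eqxx.
Qed.

End Key.

Section Final.
Variables (k : fieldType) (n : nat) (lt : rel 'X_{1..n}).
Hypothesis Hlt : term_order lt.
Hypothesis hc0 : [pchar k] =i pred0.
Local Notation S := {mpoly k[n]}.
Variables (I J : S -> Prop).
Hypothesis HI : is_homogeneous_ideal I.
Hypothesis HJ : is_homogeneous_ideal J.
Hypothesis HJI : forall f, J f -> I f.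
Hypothesis HA : quotient_artinian J.

Lemma key_all (c' : 'I_n -> k) i d :
  mul_max_rank (initial_ideal lt I) (initial_ideal lt J) (lc c' ^+ d) i d ->
  exists Q : S, Q != 0 /\ forall c, Q.@[c] != 0 -> mul_max_rank I J (lc c ^+ d) i d.
Proof.
case=> [Hinj|Hsur].
  have [Q [nz hQ]] := key_inj Hlt HI HJ HJI Hinj.
  by exists Q; split => // c hc; left; apply: hQ.
have [Q [nz hQ]] := key_surj Hlt HI HJ HJI Hsur.
by exists Q; split => // c hc; right; apply: hQ.
Qed.

Lemma final (ds : seq nat) (l' : S) : l' \is 1.-homog ->
  (forall d, d \in ds -> forall i,
     mul_max_rank (initial_ideal lt I) (initial_ideal lt J) (l' ^+ d) i d) ->
  exists c : 'I_n -> k, forall d, d \in ds -> forall i, mul_max_rank I J (lc c ^+ d) i d.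
Proof.
move=> hl H.
have el := lc_of_homog1 hl.
have [N hN] := art_bound HJ HA.
pose P i d (Q : S) := Q != 0 /\ forall c, Q.@[c] != 0 -> mul_max_rank I J (lc c ^+ d) i d.
pose Qf i d := epsilon (inhabits 1) (P i d).
have Qspec i d : d \in ds -> P i d (Qf i d).
  move=> dd; apply: epsilon_spec; apply: (@key_all (fun j => l'@_U_(j))); rewrite -el; exact: H.
pose Q := \prod_(i < N) \prod_(d <- ds) Qf i d.
have Qnz : Q != 0.
  apply/prodf_neq0 => i _; rewrite prodf_seq_neq0; apply/allP => d dd /=.
  by case: (Qspec i d dd).
have [c hc] := mpoly_nonroot hc0 Qnz.
exists c => d dd i.
case: (ltnP i N) => iN; last by left => f _ hf _; apply: hN hf.
have : Q.@[c] != 0 by [].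
rewrite /Q rmorph_prod => /prodf_neq0 /(_ (Ordinal iN) isT).
rewrite rmorph_prod prodf_seq_neq0 => /allP /(_ d dd) /= hQ.
by case: (Qspec i d dd) => _; apply.
Qed.

End Final.

Unset Implicit Arguments.

Theorem lemma3p8 (k : fieldType) (n : nat) (I J : {mpoly k[n]} -> Prop)
    (lt : rel 'X_{1..n}) :
  [pchar k] =i pred0 ->
  is_homogeneous_ideal I -> is_homogeneous_ideal J ->
  (forall f, J f -> I f) ->
  quotient_artinian J ->
  term_order lt ->
  (has_WLP (initial_ideal lt I) (initial_ideal lt J) -> has_WLP I J) /\
  (has_SLP (initial_ideal lt I) (initial_ideal lt J) -> has_SLP I J).
Proof.
move=> hc0 HI HJ HJI HA Hlt; split.
  move=> [l' [hl H]].
  have [c hc] := final Hlt hc0 HI HJ HJI HA (ds := [:: 1%N]) hl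
    (fun d dd i => ltac:(move: dd; rewrite inE => /eqP ->; rewrite expr1; exact: H)).
  exists (lc c); split; first exact: lc_homog.
  by move=> i; have := hc 1%N (mem_head _ _) i; rewrite expr1.
move=> [l' [hl H]].
have [N hN] := art_bound HJ HA.
have [c hc] := final Hlt hc0 HI HJ HJI HA (ds := iota 1 N) hl
  (fun d dd i => H d ltac:(move: dd; rewrite mem_iota => /andP [] //) i).
exists (lc c); split; first exact: lc_homog.
move=> d d0 i; case: (leqP d N) => dN.
  by apply: hc; rewrite mem_iota d0 add1n ltnS.
right => h _ hh; exists 0; split.
- by case: HI => [[]].
- exact: dhomog0.
- by rewrite mulr0 subr0; apply: hN hh; rewrite (leq_trans (ltnW dN)) // leq_addl.
Qed.
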